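(* For $0<\Delta<2$ let $S_1$ be the square with vertices $(\pm1,\pm1,0)$ and $S_2$ the square with vertices $(\Delta\pm1,0,\pm1)$ (both of side length 2); they form a Hopf link. The minimum distance energy of the link $S_1\cup S_2$ is $$E(\Delta)=8+8\left(\frac{1}{(2+\Delta)^2}+\frac{1}{(2-\Delta)^2}+\frac{2}{\Delta^2}+4+2+\frac{4}{1+\Delta^2}\right),$$ where $8$ is the sum of the self-energies of the two squares (4 each) and the remaining term is the cross-energy. The function $E$ has a unique minimizer $\Delta^*$ on $(0,2)$, where $x=(\Delta^* )^2$ is the unique root in $(0,4)$ of $2x^5-10x^4+73x^3-48x^2-40x-32=0$; numerically $\Delta^*\approx1.203$ and $E(\Delta^* )\approx93.5$.
   Context: For a link of closed polygons in $\mathbb R^3$ (each with at least four edges), the minimum distance (MD) energy is $E_{MD}=\sum_{(e,e')}\frac{\ell_e\ell_{e'}}{\mathrm{MD}(e,e')^2}$, summed over all ordered pairs $(e,e')$ of distinct edges that share no vertex (edges on different components never share a vertex), where $\ell_e$ is the length of edge $e$ and $\mathrm{MD}(e,e')$ is the minimum Euclidean distance between the two closed line segments. With this convention a square has MD energy $4$. *)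

(* Defs.v *)
From HB Require Import structures.
From mathcomp Require Import all_boot all_order all_algebra.
From mathcomp Require Import all_classical all_reals.
Set Implicit Arguments. Unset Strict Implicit. Unset Printing Implicit Defensive.
Import Order.TTheory GRing.Theory Num.Theory.
Local Open Scope classical_set_scope.
Local Open Scope ring_scope.

Section MD.
Variable R : realType.

Record pt := Pt { px : R; py : R; pz : R }.

Definition pt0 : pt := Pt 0 0 0.

Definition dist (p q : pt) : R :=
  Num.sqrt ((px p - px q) ^+ 2 + (py p - py q) ^+ 2 + (pz p - pz q) ^+ 2).

Definition seg_pt (p q : pt) (t : R) : pt :=
  Pt (px p + t * (px q - px p)) (py p + t * (py q - py p))
     (pz p + t * (pz q - pz p)).

Definition seg_dist (p q r s : pt) : R :=
  inf [set d | exists u v, [/\ 0 <= u <= 1, 0 <= v <= 1 &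
                           d = dist (seg_pt p q u) (seg_pt r s v)]].

(* a closed polygon is given by its cyclic list of vertices P_0 ... P_{n-1};
   its edges are e_i = [P_i, P_{(i+1) mod n}], i < n. A link is a list of
   closed polygons. *)
Definition polygon := seq pt.
Definition link := seq polygon.

Definition vtx (P : polygon) (i : nat) : pt := nth pt0 P (i %% size P)%N.
Definition edge_len (P : polygon) (i : nat) : R := dist (vtx P i) (vtx P i.+1).

Definition share_vertex (n i j : nat) : bool :=
  [|| i == j, (i.+1 %% n == j)%N | (j.+1 %% n == i)%N].

Definition edge_MD (P Q : polygon) (i j : nat) : R :=
  seg_dist (vtx P i) (vtx P i.+1) (vtx Q j) (vtx Q j.+1).

(* minimum distance energy: sum over ordered pairs of distinct edges
   sharing no vertex (edges on different components never share one). *)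
Definition MD_energy (L : link) : R :=
  \sum_(0 <= c < size L) \sum_(0 <= c' < size L)
   \sum_(0 <= i < size (nth [::] L c)) \sum_(0 <= j < size (nth [::] L c'))
     (if (c == c') && share_vertex (size (nth [::] L c)) i j then 0
      else edge_len (nth [::] L c) i * edge_len (nth [::] L c') j
           / (edge_MD (nth [::] L c) (nth [::] L c') i j) ^+ 2).

Definition square1 : polygon :=
  [:: Pt 1 1 0; Pt (-1) 1 0; Pt (-1) (-1) 0; Pt 1 (-1) 0].
Definition square2 (D : R) : polygon :=
  [:: Pt (D + 1) 0 1; Pt (D - 1) 0 1; Pt (D - 1) 0 (-1); Pt (D + 1) 0 (-1)].
Definition hopf_link (D : R) : link := [:: square1; square2 D].

Definition E_formula (D : R) : R :=
  8 + 8 * (1 / (2 + D) ^+ 2 + 1 / (2 - D) ^+ 2 + 2 / D ^+ 2 + 4 + 2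
           + 4 / (1 + D ^+ 2)).

Definition quintic (x : R) : R :=
  2 * x ^+ 5 - 10 * x ^+ 4 + 73 * x ^+ 3 - 48 * x ^+ 2 - 40 * x - 32.

End MD.

(* Main.v *)
Require Import Defs.
From HB Require Import structures.
From mathcomp Require Import all_boot all_order all_algebra.
From mathcomp Require Import all_classical all_reals.
From mathcomp Require Import ring lra.
Import Order.TTheory GRing.Theory Num.Theory.
Local Open Scope classical_set_scope.
Local Open Scope ring_scope.

Section S.
Variable R : realType.

Definition sqd (p q : pt R) : R :=
  (px p - px q) ^+ 2 + (py p - py q) ^+ 2 + (pz p - pz q) ^+ 2.

Lemma segdE (p q r s : pt R) (c : R) : 0 <= c ->
  (forall u v : R, 0 <= u <= 1 -> 0 <= v <= 1 ->
     c <= sqd (seg_pt p q u) (seg_pt r s v)) ->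
  (exists u v : R, [/\ 0 <= u <= 1, 0 <= v <= 1 &
     sqd (seg_pt p q u) (seg_pt r s v) = c]) ->
  seg_dist p q r s = Num.sqrt c.
Proof.
move=> c0 lb [u0 [v0 [hu hv hc]]].
rewrite /seg_dist.
set E := [set d | _].
have inE : E (Num.sqrt c).
  by exists u0, v0; split => //; rewrite /dist -hc.
have lbE : lbound E (Num.sqrt c).
  move=> d [u [v [hu' hv' ->]]].
  rewrite /dist ler_sqrt; first exact: (lb u v hu' hv').
  by rewrite !addr_ge0 ?sqr_ge0.
apply/eqP; rewrite eq_le; apply/andP; split.
  by apply: (ge_inf (ex_intro _ _ lbE)).
by apply: lb_le_inf => //; exists (Num.sqrt c).
Qed.

Lemma segd2 (p q r s : pt R) (c : R) : 0 <= c ->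
  (forall u v : R, 0 <= u <= 1 -> 0 <= v <= 1 ->
     0 <= (px (seg_pt p q u) - px (seg_pt r s v)) ^+ 2 ->
     0 <= (py (seg_pt p q u) - py (seg_pt r s v)) ^+ 2 ->
     0 <= (pz (seg_pt p q u) - pz (seg_pt r s v)) ^+ 2 ->
     c <= sqd (seg_pt p q u) (seg_pt r s v)) ->
  (exists u v : R, [/\ 0 <= u <= 1, 0 <= v <= 1 &
     sqd (seg_pt p q u) (seg_pt r s v) = c]) ->
  seg_dist p q r s ^+ 2 = c.
Proof. move=> c0 lb ex; rewrite (@segdE p q r s c) ?sqr_sqrtr //.
by move=> u v hu hv; apply: lb => //; apply: sqr_ge0. Qed.

Lemma dist2 (p q : pt R) : sqd p q = 2 ^+ 2 -> dist p q = 2.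
Proof. by rewrite /dist -/(sqd p q) => ->; rewrite sqrtr_sqr ger0_norm. Qed.

End S.

Ltac sq_hint := match goal with |- _ <= ?a ^+ 2 + ?b ^+ 2 + ?e ^+ 2 =>
  have := sqr_ge0 a; have := sqr_ge0 b; have := sqr_ge0 e end.
Ltac solve_seg u0 v0 :=
  apply: segd2; [nra | move=> u v /andP[hu0 hu1] /andP[hv0 hv1]; rewrite /sqd /= => h1 h2 h3; nra
  | exists u0, v0; split; [apply/andP; split; lra | apply/andP; split; lra | rewrite /sqd /=; field]]; try done.
Ltac solve_dist := apply: dist2; rewrite /sqd /=; ring.

Lemma sd1 (R : realType) (D : R) (hD0 : 0 < D) (hD2 : D < 2) :
  seg_dist (@Pt R 1 1 0) (@Pt R (-1) 1 0) (@Pt R (D + 1) 0 1) (@Pt R (D - 1) 0 1) ^+ 2 = 2.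
Proof. solve_seg (0 : R) (D/2 : R). Qed.
Lemma sd2 (R : realType) (D : R) (hD0 : 0 < D) (hD2 : D < 2) :
  seg_dist (@Pt R (D + 1) 0 1) (@Pt R (D - 1) 0 1) (@Pt R 1 1 0) (@Pt R (-1) 1 0) ^+ 2 = 2.
Proof. solve_seg (D/2 : R) (0 : R). Qed.
Lemma sd3 (R : realType) (D : R) (hD0 : 0 < D) (hD2 : D < 2) :
  seg_dist (@Pt R 1 1 0) (@Pt R (-1) 1 0) (@Pt R (D - 1) 0 1) (@Pt R (D - 1) 0 (-1)) ^+ 2 = 1.
Proof. solve_seg (1-D/2 : R) (1/2 : R). Qed.
Lemma sd4 (R : realType) (D : R) (hD0 : 0 < D) (hD2 : D < 2) :
  seg_dist (@Pt R (D - 1) 0 1) (@Pt R (D - 1) 0 (-1)) (@Pt R 1 1 0) (@Pt R (-1) 1 0) ^+ 2 = 1.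
Proof. solve_seg (1/2 : R) (1-D/2 : R). Qed.
Lemma sd5 (R : realType) (D : R) (hD0 : 0 < D) (hD2 : D < 2) :
  seg_dist (@Pt R 1 1 0) (@Pt R (-1) 1 0) (@Pt R (D - 1) 0 (-1)) (@Pt R (D + 1) 0 (-1)) ^+ 2 = 2.
Proof. solve_seg (0 : R) ((2-D)/2 : R). Qed.
Lemma sd6 (R : realType) (D : R) (hD0 : 0 < D) (hD2 : D < 2) :
  seg_dist (@Pt R (D - 1) 0 (-1)) (@Pt R (D + 1) 0 (-1)) (@Pt R 1 1 0) (@Pt R (-1) 1 0) ^+ 2 = 2.
Proof. solve_seg ((2-D)/2 : R) (0 : R). Qed.
Lemma sd7 (R : realType) (D : R) (hD0 : 0 < D) (hD2 : D < 2) :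
  seg_dist (@Pt R 1 1 0) (@Pt R (-1) 1 0) (@Pt R (D + 1) 0 (-1)) (@Pt R (D + 1) 0 1) ^+ 2 = 1+D^+2.
Proof. solve_seg (0 : R) (1/2 : R). Qed.
Lemma sd8 (R : realType) (D : R) (hD0 : 0 < D) (hD2 : D < 2) :
  seg_dist (@Pt R (D + 1) 0 (-1)) (@Pt R (D + 1) 0 1) (@Pt R 1 1 0) (@Pt R (-1) 1 0) ^+ 2 = 1+D^+2.
Proof. solve_seg (1/2 : R) (0 : R). Qed.
Lemma sd9 (R : realType) (D : R) (hD0 : 0 < D) (hD2 : D < 2) :
  seg_dist (@Pt R (-1) 1 0) (@Pt R (-1) (-1) 0) (@Pt R (D + 1) 0 1) (@Pt R (D - 1) 0 1) ^+ 2 = D^+2+1.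
Proof. solve_seg (1/2 : R) (1 : R). Qed.
Lemma sd10 (R : realType) (D : R) (hD0 : 0 < D) (hD2 : D < 2) :
  seg_dist (@Pt R (D + 1) 0 1) (@Pt R (D - 1) 0 1) (@Pt R (-1) 1 0) (@Pt R (-1) (-1) 0) ^+ 2 = D^+2+1.
Proof. solve_seg (1 : R) (1/2 : R). Qed.
Lemma sd11 (R : realType) (D : R) (hD0 : 0 < D) (hD2 : D < 2) :
  seg_dist (@Pt R (-1) 1 0) (@Pt R (-1) (-1) 0) (@Pt R (D - 1) 0 1) (@Pt R (D - 1) 0 (-1)) ^+ 2 = D^+2.
Proof. solve_seg (1/2 : R) (1/2 : R). Qed.
Lemma sd12 (R : realType) (D : R) (hD0 : 0 < D) (hD2 : D < 2) :
  seg_dist (@Pt R (D - 1) 0 1) (@Pt R (D - 1) 0 (-1)) (@Pt R (-1) 1 0) (@Pt R (-1) (-1) 0) ^+ 2 = D^+2.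
Proof. solve_seg (1/2 : R) (1/2 : R). Qed.
Lemma sd13 (R : realType) (D : R) (hD0 : 0 < D) (hD2 : D < 2) :
  seg_dist (@Pt R (-1) 1 0) (@Pt R (-1) (-1) 0) (@Pt R (D - 1) 0 (-1)) (@Pt R (D + 1) 0 (-1)) ^+ 2 = D^+2+1.
Proof. solve_seg (1/2 : R) (0 : R). Qed.
Lemma sd14 (R : realType) (D : R) (hD0 : 0 < D) (hD2 : D < 2) :
  seg_dist (@Pt R (D - 1) 0 (-1)) (@Pt R (D + 1) 0 (-1)) (@Pt R (-1) 1 0) (@Pt R (-1) (-1) 0) ^+ 2 = D^+2+1.
Proof. solve_seg (0 : R) (1/2 : R). Qed.
Lemma sd15 (R : realType) (D : R) (hD0 : 0 < D) (hD2 : D < 2) :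
  seg_dist (@Pt R (-1) 1 0) (@Pt R (-1) (-1) 0) (@Pt R (D + 1) 0 (-1)) (@Pt R (D + 1) 0 1) ^+ 2 = (D+2)^+2.
Proof. solve_seg (1/2 : R) (1/2 : R). Qed.
Lemma sd16 (R : realType) (D : R) (hD0 : 0 < D) (hD2 : D < 2) :
  seg_dist (@Pt R (D + 1) 0 (-1)) (@Pt R (D + 1) 0 1) (@Pt R (-1) 1 0) (@Pt R (-1) (-1) 0) ^+ 2 = (D+2)^+2.
Proof. solve_seg (1/2 : R) (1/2 : R). Qed.
Lemma sd17 (R : realType) (D : R) (hD0 : 0 < D) (hD2 : D < 2) :
  seg_dist (@Pt R (-1) (-1) 0) (@Pt R 1 (-1) 0) (@Pt R (D + 1) 0 1) (@Pt R (D - 1) 0 1) ^+ 2 = 2.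
Proof. solve_seg (1 : R) (D/2 : R). Qed.
Lemma sd18 (R : realType) (D : R) (hD0 : 0 < D) (hD2 : D < 2) :
  seg_dist (@Pt R (D + 1) 0 1) (@Pt R (D - 1) 0 1) (@Pt R (-1) (-1) 0) (@Pt R 1 (-1) 0) ^+ 2 = 2.
Proof. solve_seg (D/2 : R) (1 : R). Qed.
Lemma sd19 (R : realType) (D : R) (hD0 : 0 < D) (hD2 : D < 2) :
  seg_dist (@Pt R (-1) (-1) 0) (@Pt R 1 (-1) 0) (@Pt R (D - 1) 0 1) (@Pt R (D - 1) 0 (-1)) ^+ 2 = 1.
Proof. solve_seg (D/2 : R) (1/2 : R). Qed.
Lemma sd20 (R : realType) (D : R) (hD0 : 0 < D) (hD2 : D < 2) :
  seg_dist (@Pt R (D - 1) 0 1) (@Pt R (D - 1) 0 (-1)) (@Pt R (-1) (-1) 0) (@Pt R 1 (-1) 0) ^+ 2 = 1.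
Proof. solve_seg (1/2 : R) (D/2 : R). Qed.
Lemma sd21 (R : realType) (D : R) (hD0 : 0 < D) (hD2 : D < 2) :
  seg_dist (@Pt R (-1) (-1) 0) (@Pt R 1 (-1) 0) (@Pt R (D - 1) 0 (-1)) (@Pt R (D + 1) 0 (-1)) ^+ 2 = 2.
Proof. solve_seg (1 : R) ((2-D)/2 : R). Qed.
Lemma sd22 (R : realType) (D : R) (hD0 : 0 < D) (hD2 : D < 2) :
  seg_dist (@Pt R (D - 1) 0 (-1)) (@Pt R (D + 1) 0 (-1)) (@Pt R (-1) (-1) 0) (@Pt R 1 (-1) 0) ^+ 2 = 2.
Proof. solve_seg ((2-D)/2 : R) (1 : R). Qed.
Lemma sd23 (R : realType) (D : R) (hD0 : 0 < D) (hD2 : D < 2) :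
  seg_dist (@Pt R (-1) (-1) 0) (@Pt R 1 (-1) 0) (@Pt R (D + 1) 0 (-1)) (@Pt R (D + 1) 0 1) ^+ 2 = 1+D^+2.
Proof. solve_seg (1 : R) (1/2 : R). Qed.
Lemma sd24 (R : realType) (D : R) (hD0 : 0 < D) (hD2 : D < 2) :
  seg_dist (@Pt R (D + 1) 0 (-1)) (@Pt R (D + 1) 0 1) (@Pt R (-1) (-1) 0) (@Pt R 1 (-1) 0) ^+ 2 = 1+D^+2.
Proof. solve_seg (1/2 : R) (1 : R). Qed.
Lemma sd25 (R : realType) (D : R) (hD0 : 0 < D) (hD2 : D < 2) :
  seg_dist (@Pt R 1 (-1) 0) (@Pt R 1 1 0) (@Pt R (D + 1) 0 1) (@Pt R (D - 1) 0 1) ^+ 2 = 1.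
Proof. solve_seg (1/2 : R) (D/2 : R). Qed.
Lemma sd26 (R : realType) (D : R) (hD0 : 0 < D) (hD2 : D < 2) :
  seg_dist (@Pt R (D + 1) 0 1) (@Pt R (D - 1) 0 1) (@Pt R 1 (-1) 0) (@Pt R 1 1 0) ^+ 2 = 1.
Proof. solve_seg (D/2 : R) (1/2 : R). Qed.
Lemma sd27 (R : realType) (D : R) (hD0 : 0 < D) (hD2 : D < 2) :
  seg_dist (@Pt R 1 (-1) 0) (@Pt R 1 1 0) (@Pt R (D - 1) 0 1) (@Pt R (D - 1) 0 (-1)) ^+ 2 = (2-D)^+2.
Proof. solve_seg (1/2 : R) (1/2 : R). Qed.
Lemma sd28 (R : realType) (D : R) (hD0 : 0 < D) (hD2 : D < 2) :
  seg_dist (@Pt R (D - 1) 0 1) (@Pt R (D - 1) 0 (-1)) (@Pt R 1 (-1) 0) (@Pt R 1 1 0) ^+ 2 = (2-D)^+2.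
Proof. solve_seg (1/2 : R) (1/2 : R). Qed.
Lemma sd29 (R : realType) (D : R) (hD0 : 0 < D) (hD2 : D < 2) :
  seg_dist (@Pt R 1 (-1) 0) (@Pt R 1 1 0) (@Pt R (D - 1) 0 (-1)) (@Pt R (D + 1) 0 (-1)) ^+ 2 = 1.
Proof. solve_seg (1/2 : R) ((2-D)/2 : R). Qed.
Lemma sd30 (R : realType) (D : R) (hD0 : 0 < D) (hD2 : D < 2) :
  seg_dist (@Pt R (D - 1) 0 (-1)) (@Pt R (D + 1) 0 (-1)) (@Pt R 1 (-1) 0) (@Pt R 1 1 0) ^+ 2 = 1.
Proof. solve_seg ((2-D)/2 : R) (1/2 : R). Qed.
Lemma sd31 (R : realType) (D : R) (hD0 : 0 < D) (hD2 : D < 2) :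
  seg_dist (@Pt R 1 (-1) 0) (@Pt R 1 1 0) (@Pt R (D + 1) 0 (-1)) (@Pt R (D + 1) 0 1) ^+ 2 = D^+2.
Proof. solve_seg (1/2 : R) (1/2 : R). Qed.
Lemma sd32 (R : realType) (D : R) (hD0 : 0 < D) (hD2 : D < 2) :
  seg_dist (@Pt R (D + 1) 0 (-1)) (@Pt R (D + 1) 0 1) (@Pt R 1 (-1) 0) (@Pt R 1 1 0) ^+ 2 = D^+2.
Proof. solve_seg (1/2 : R) (1/2 : R). Qed.
Lemma sd33 (R : realType) (D : R) (hD0 : 0 < D) (hD2 : D < 2) :
  seg_dist (@Pt R 1 1 0) (@Pt R (-1) 1 0) (@Pt R (-1) (-1) 0) (@Pt R 1 (-1) 0) ^+ 2 = 4.
Proof. solve_seg (0 : R) (1 : R). Qed.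
Lemma sd34 (R : realType) (D : R) (hD0 : 0 < D) (hD2 : D < 2) :
  seg_dist (@Pt R (-1) (-1) 0) (@Pt R 1 (-1) 0) (@Pt R 1 1 0) (@Pt R (-1) 1 0) ^+ 2 = 4.
Proof. solve_seg (0 : R) (1 : R). Qed.
Lemma sd35 (R : realType) (D : R) (hD0 : 0 < D) (hD2 : D < 2) :
  seg_dist (@Pt R (-1) 1 0) (@Pt R (-1) (-1) 0) (@Pt R 1 (-1) 0) (@Pt R 1 1 0) ^+ 2 = 4.
Proof. solve_seg (0 : R) (1 : R). Qed.
Lemma sd36 (R : realType) (D : R) (hD0 : 0 < D) (hD2 : D < 2) :
  seg_dist (@Pt R 1 (-1) 0) (@Pt R 1 1 0) (@Pt R (-1) 1 0) (@Pt R (-1) (-1) 0) ^+ 2 = 4.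
Proof. solve_seg (0 : R) (1 : R). Qed.
Lemma sd37 (R : realType) (D : R) (hD0 : 0 < D) (hD2 : D < 2) :
  seg_dist (@Pt R (D + 1) 0 1) (@Pt R (D - 1) 0 1) (@Pt R (D - 1) 0 (-1)) (@Pt R (D + 1) 0 (-1)) ^+ 2 = 4.
Proof. solve_seg (0 : R) (1 : R). Qed.
Lemma sd38 (R : realType) (D : R) (hD0 : 0 < D) (hD2 : D < 2) :
  seg_dist (@Pt R (D - 1) 0 (-1)) (@Pt R (D + 1) 0 (-1)) (@Pt R (D + 1) 0 1) (@Pt R (D - 1) 0 1) ^+ 2 = 4.
Proof. solve_seg (0 : R) (1 : R). Qed.
Lemma sd39 (R : realType) (D : R) (hD0 : 0 < D) (hD2 : D < 2) :
  seg_dist (@Pt R (D - 1) 0 1) (@Pt R (D - 1) 0 (-1)) (@Pt R (D + 1) 0 (-1)) (@Pt R (D + 1) 0 1) ^+ 2 = 4.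
Proof. solve_seg (0 : R) (1 : R). Qed.
Lemma sd40 (R : realType) (D : R) (hD0 : 0 < D) (hD2 : D < 2) :
  seg_dist (@Pt R (D + 1) 0 (-1)) (@Pt R (D + 1) 0 1) (@Pt R (D - 1) 0 1) (@Pt R (D - 1) 0 (-1)) ^+ 2 = 4.
Proof. solve_seg (0 : R) (1 : R). Qed.
Lemma sd41 (R : realType) (D : R) :
  dist (@Pt R 1 1 0) (@Pt R (-1) 1 0) = 2.
Proof. solve_dist. Qed.
Lemma sd42 (R : realType) (D : R) :
  dist (@Pt R (-1) 1 0) (@Pt R (-1) (-1) 0) = 2.
Proof. solve_dist. Qed.
Lemma sd43 (R : realType) (D : R) :
  dist (@Pt R (-1) (-1) 0) (@Pt R 1 (-1) 0) = 2.
Proof. solve_dist. Qed.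
Lemma sd44 (R : realType) (D : R) :
  dist (@Pt R 1 (-1) 0) (@Pt R 1 1 0) = 2.
Proof. solve_dist. Qed.
Lemma sd45 (R : realType) (D : R) :
  dist (@Pt R (D + 1) 0 1) (@Pt R (D - 1) 0 1) = 2.
Proof. solve_dist. Qed.
Lemma sd46 (R : realType) (D : R) :
  dist (@Pt R (D - 1) 0 1) (@Pt R (D - 1) 0 (-1)) = 2.
Proof. solve_dist. Qed.
Lemma sd47 (R : realType) (D : R) :
  dist (@Pt R (D - 1) 0 (-1)) (@Pt R (D + 1) 0 (-1)) = 2.
Proof. solve_dist. Qed.
Lemma sd48 (R : realType) (D : R) :
  dist (@Pt R (D + 1) 0 (-1)) (@Pt R (D + 1) 0 1) = 2.
Proof. solve_dist. Qed.
Lemma energy (R : realType) (D : R) : 0 < D < 2 -> MD_energy (hopf_link D) = E_formula D.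
Proof.
move=> /andP[hD0 hD2].
rewrite /MD_energy /= unlock /=.
rewrite /edge_len /edge_MD /vtx /=.
rewrite ?(@sd1 R D hD0 hD2) ?(@sd2 R D hD0 hD2) ?(@sd3 R D hD0 hD2) ?(@sd4 R D hD0 hD2) ?(@sd5 R D hD0 hD2) ?(@sd6 R D hD0 hD2) ?(@sd7 R D hD0 hD2) ?(@sd8 R D hD0 hD2) ?(@sd9 R D hD0 hD2) ?(@sd10 R D hD0 hD2) ?(@sd11 R D hD0 hD2) ?(@sd12 R D hD0 hD2) ?(@sd13 R D hD0 hD2) ?(@sd14 R D hD0 hD2) ?(@sd15 R D hD0 hD2) ?(@sd16 R D hD0 hD2) ?(@sd17 R D hD0 hD2) ?(@sd18 R D hD0 hD2) ?(@sd19 R D hD0 hD2) ?(@sd20 R D hD0 hD2) ?(@sd21 R D hD0 hD2) ?(@sd22 R D hD0 hD2) ?(@sd23 R D hD0 hD2) ?(@sd24 R D hD0 hD2) ?(@sd25 R D hD0 hD2) ?(@sd26 R D hD0 hD2) ?(@sd27 R D hD0 hD2) ?(@sd28 R D hD0 hD2) ?(@sd29 R D hD0 hD2) ?(@sd30 R D hD0 hD2) ?(@sd31 R D hD0 hD2) ?(@sd32 R D hD0 hD2) ?(@sd33 R D hD0 hD2) ?(@sd34 R D hD0 hD2) ?(@sd35 R D hD0 hD2) ?(@sd36 R D hD0 hD2) ?(@sd37 R D hD0 hD2) ?(@sd38 R D hD0 hD2) ?(@sd39 R D hD0 hD2) ?(@sd40 R D hD0 hD2) ?(sd41 R D) ?(sd42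 R D) ?(sd43 R D) ?(sd44 R D) ?(sd45 R D) ?(sd46 R D) ?(sd47 R D) ?(sd48 R D).
rewrite /E_formula; field.
have h1 : 1 + D ^+ 2 != 0 by rewrite gt_eqF // ltr_pwDl // sqr_ge0.
have h2 : D != 0 by rewrite gt_eqF.
have h3 : 2 - D != 0 by rewrite gt_eqF // subr_gt0.
have h4 : 2 + D != 0 by rewrite gt_eqF // addr_gt0.
by rewrite h1 h2 h3 h4.
Qed.

Section B.
Variable R : realType.
Implicit Types x y : R.

Definition hh x : R := (8 + 2 * x) / (4 - x) ^+ 2 + 2 / x + 4 / (1 + x).
Definition dd x : R := x * (1 + x) * (4 - x) ^+ 2.
Definition c0 y : R := -256 - 832 * y + 1392 * y ^+ 2 - 452 * y ^+ 3 + 72 * y ^+ 4 - 8 * y ^+ 5.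
Definition c1 y : R := 224 + 680 * y - 364 * y ^+ 2 + 72 * y ^+ 3 - 8 * y ^+ 4.
Definition c2 y : R := -32 - 88 * y + 36 * y ^+ 2 - 8 * y ^+ 3.
Definition Rp x y : R := c0 y + c1 y * x + c2 y * x ^+ 2.

Lemma E_hh D : 0 < D -> D < 2 -> E_formula D = 56 + 8 * hh (D ^+ 2).
Proof.
move=> h0 h2; rewrite /E_formula /hh.
have h1 : 1 + D ^+ 2 != 0 by rewrite gt_eqF // ltr_pwDl // sqr_ge0.
have hb : D != 0 by rewrite gt_eqF.
have h3 : 2 - D != 0 by rewrite gt_eqF // subr_gt0.
have h4 : 2 + D != 0 by rewrite gt_eqF // addr_gt0.
have h5 : 4 - D ^+ 2 != 0 by rewrite gt_eqF //; nra.
field; by rewrite h1 hb h3 h4 ?h5.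
Qed.

Lemma hh_diff x y : 0 < x < 4 -> 0 < y < 4 ->
  (hh x - hh y) * (dd x * dd y) = (x - y) ^+ 2 * Rp x y + 4 * (x - y) * (4 - y) * quintic y.
Proof.
move=> /andP[x0 x4] /andP[y0 y4].
have ex0 : x != 0 by rewrite gt_eqF.
have ey0 : y != 0 by rewrite gt_eqF.
have ex1 : 1 + x != 0 by rewrite gt_eqF // addr_gt0.
have ey1 : 1 + y != 0 by rewrite gt_eqF // addr_gt0.
have ex4 : 4 - x != 0 by rewrite gt_eqF // subr_gt0.
have ey4 : 4 - y != 0 by rewrite gt_eqF // subr_gt0.
rewrite /hh /dd /Rp /c0 /c1 /c2 /quintic.
field; by rewrite ex0 ey0 ex1 ey1 ex4 ey4.
Qed.

Definition lo : R := 1448 / 1000.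
Definition hi : R := 14495 / 10000.

Lemma c2_neg y : lo <= y <= hi -> c2 y < 0.
Proof. rewrite /lo /hi /c2 => /andP[h1 h2]; nra. Qed.
Lemma c0_pos y : lo <= y <= hi -> 0 < c0 y.
Proof. rewrite /lo /hi /c0 => /andP[h1 h2]; nra. Qed.
Lemma c4_pos y : lo <= y <= hi -> 0 < c0 y + 4 * c1 y + 16 * c2 y.
Proof. rewrite /lo /hi /c0 /c1 /c2 => /andP[h1 h2]; nra. Qed.

Lemma Rp_pos x y : 0 < x < 4 -> lo <= y <= hi -> 0 < Rp x y.
Proof.
move=> /andP[x0 x4] hy.
have a := c2_neg y hy; have b := c0_pos y hy; have c := c4_pos y hy.
have e : 4 * Rp x y = (4 - x) * c0 y + x * (c0 y + 4 * c1 y + 16 * c2 y)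
   - 4 * c2 y * (x * (4 - x)) by rewrite /Rp; ring.
have p1 : 0 < (4 - x) * c0 y by rewrite mulr_gt0 // subr_gt0.
have p2 : 0 < x * (c0 y + 4 * c1 y + 16 * c2 y) by rewrite mulr_gt0.
have p3 : 0 < x * (4 - x) by rewrite mulr_gt0 // subr_gt0.
have p4 : 0 < - c2 y * (x * (4 - x)) by rewrite mulr_gt0 // oppr_gt0.
lra.
Qed.

Lemma q_lo : quintic lo < 0.
Proof. rewrite /quintic /lo; lra. Qed.
Lemma q_hi : 0 < quintic hi.
Proof. rewrite /quintic /hi; lra. Qed.

Definition Sq x y : R := 2 * (x ^+ 4 + x ^+ 3 * y + x ^+ 2 * y ^+ 2 + x * y ^+ 3 + y ^+ 4)
  - 10 * (x ^+ 3 + x ^+ 2 * y + x * y ^+ 2 + y ^+ 3) + 73 * (x ^+ 2 + x * y + y ^+ 2)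
  - 48 * (x + y) - 40.

Lemma q_diff x y : quintic x - quintic y = (x - y) * Sq x y.
Proof. rewrite /quintic /Sq; ring. Qed.

Lemma Sq_pos x y : 1 <= x <= 4 -> lo <= y <= hi -> 0 < Sq x y.
Proof. rewrite /Sq /lo /hi => /andP[h1 h2] /andP[h3 h4]; nra. Qed.

Lemma q_neg x : 0 < x <= 1 -> quintic x < 0.
Proof. rewrite /quintic => /andP[h1 h2]; nra. Qed.

Lemma hh_bounds x : lo <= x <= hi -> 3745 / 800 < hh x < 3755 / 800.
Proof.
move=> /andP[h1 h2].
have x0 : 0 < x by apply: lt_le_trans h1; rewrite /lo; lra.
have ex0 : x != 0 by rewrite gt_eqF.
have ex1 : 1 + x != 0 by rewrite gt_eqF // addr_gt0.
have x4 : x < 4 by apply: le_lt_trans h2 _; rewrite /hi; lra.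
have ex4 : 4 - x != 0 by rewrite gt_eqF // subr_gt0.
have dp : 0 < dd x.
  rewrite /dd; have t : 0 < 4 - x by rewrite subr_gt0.
  have t2 : 0 < (4 - x) ^+ 2 by rewrite exprn_gt0.
  have t1 : 0 < 1 + x by rewrite addr_gt0.
  by rewrite !mulr_gt0.
  
have -> : hh x = ((8 + 2 * x) * x * (1 + x) + 2 * (1 + x) * (4 - x) ^+ 2 + 4 * x * (4 - x) ^+ 2) / dd x.
  rewrite /hh /dd; field; by rewrite ex0 ex1 ex4.
rewrite ltr_pdivlMr // ltr_pdivrMr //; rewrite /dd; move: h1 h2; rewrite /lo /hi => h1 h2.
apply/andP; split; nra.
Qed.

Lemma dd_pos x : 0 < x < 4 -> 0 < dd x.
Proof.
move=> /andP[x0 x4]; rewrite /dd; have t : 0 < 4 - x by rewrite subr_gt0.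
have t2 : 0 < (4 - x) ^+ 2 by rewrite exprn_gt0.
have t1 : 0 < 1 + x by rewrite addr_gt0.
by rewrite !mulr_gt0.
Qed.
End B.

Theorem mainTheorem4 (R : realType) :
  (forall D : R, 0 < D < 2 -> MD_energy (hopf_link D) = E_formula D) /\
  (exists Dstar : R,
     [/\ 0 < Dstar < 2,
         (forall D : R, 0 < D < 2 -> D != Dstar -> E_formula Dstar < E_formula D),
         (quintic (Dstar ^+ 2) = 0 /\
          forall x : R, 0 < x < 4 -> quintic x = 0 -> x = Dstar ^+ 2)
       & `|Dstar - 1203 / 1000| < 1 / 1000 /\
         `|E_formula Dstar - 935 / 10| < 1 / 20]).
Proof.
split; first by move=> D; exact: energy.
pose p : {poly R} := 2%:P * 'X^5 - 10%:P * 'X^4 + 73%:P * 'X^3 - 48%:P * 'X^2 - 40%:P * 'X - 32%:P.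
have pE : forall x, p.[x] = quintic x.
  move=> x; rewrite /p !(hornerD, hornerN, hornerM, hornerC, hornerXn, hornerX) /quintic; ring.
have [xs /andP[hlo hhi] hr] : exists2 xs : R, lo R <= xs <= hi R & root p xs.
  apply: poly_ivt; first by rewrite /lo /hi; lra.
  by rewrite !pE; apply/andP; split; apply: ltW; [exact: (q_lo R) | exact: (q_hi R)].
have qx : quintic xs = 0 by rewrite -pE; apply/eqP.
have xs0 : 0 < xs by apply: lt_le_trans hlo; rewrite /lo; lra.
have xs4 : xs < 4 by apply: le_lt_trans hhi _; rewrite /hi; lra.
set Ds := Num.sqrt xs.
have Ds2 : Ds ^+ 2 = xs by rewrite sqr_sqrtr // ltW.
have Ds0 : 0 < Ds by rewrite sqrtr_gt0.
have Dsl2 : Ds < 2 by nra.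
exists Ds; split.
- by rewrite Ds0 Dsl2.
- move=> D /andP[D0 D2] hne.
  rewrite (@E_hh R D D0 D2) (@E_hh R Ds Ds0 Dsl2) Ds2.
  have x0 : 0 < D ^+ 2 by rewrite exprn_gt0.
  have x4 : D ^+ 2 < 4 by nra.
  have hneq : D ^+ 2 != xs.
    apply/eqP => e; move/eqP: hne; apply.
    by rewrite /Ds -e sqrtr_sqr ger0_norm // ltW.
  have hx : 0 < D ^+ 2 < 4 by rewrite x0 x4.
  have hy : 0 < xs < 4 by rewrite xs0 xs4.
  have := @hh_diff R _ _ hx hy; rewrite qx mulr0 addr0 => e.
  have dpos : 0 < dd R (D ^+ 2) * dd R xs by rewrite mulr_gt0 // (@dd_pos R) ?hx ?hy.
  have sq : 0 < (D ^+ 2 - xs) ^+ 2.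
    by rewrite lt_def sqrf_eq0 subr_eq0 hneq sqr_ge0.
  have rp : 0 < Rp R (D ^+ 2) xs by apply: (@Rp_pos R) => //; rewrite hlo hhi.
  have : 0 < (hh R (D ^+ 2) - hh R xs) * (dd R (D ^+ 2) * dd R xs) by rewrite e mulr_gt0.
  rewrite pmulr_lgt0 // subr_gt0 => h.
  lra.
- split; first by rewrite Ds2.
  move=> x /andP[x0 x4] qx0; rewrite Ds2.
  case: (lerP x 1) => hx.
    by have := @q_neg R x; rewrite qx0 x0 hx ltxx => /(_ isT).
  have := @q_diff R x xs; rewrite qx0 qx subrr => /esym/eqP; rewrite mulf_eq0 => /orP[].
    by rewrite subr_eq0 => /eqP.
  have hs : 0 < Sq R x xs.
    by apply: (@Sq_pos R); [rewrite (ltW hx) (ltW x4) | rewrite hlo hhi].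
  by rewrite gt_eqF.
- split.
    rewrite ltr_norml; move: hlo hhi; rewrite /lo /hi => h1 h2.
    apply/andP; split; nra.
  rewrite (@E_hh R Ds Ds0 Dsl2) Ds2.
  have := @hh_bounds R xs; rewrite hlo hhi => /(_ isT) /andP[b1 b2].
  rewrite ltr_norml; apply/andP; split; lra.
Qed.
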